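(* Assume the setup (S) of the context, and suppose moreover that $\mathbb{B}$ is split exact and $I=R$. Then the complex $\mathbb{A}$ is split exact.
   Context: Setup (S): $R$ is a Noetherian unique factorization domain with $1/2\in R$; $p\ge1$, $q\ge3$, $n=p+2$; $B_0=R^{q-2}$, $B_1=R^{p+q}$, $H=R^n$. On $H\oplus H^*$ let $Q(f,f')=f'(f)$ and $\beta\big((f,f'),(g,g')\big)=f'(g)+g'(f)$, which identifies $(H\oplus H^* )^*$ with $H\oplus H^*$. Let $\mathbb{B}\colon 0\to B_0^*\xrightarrow{\delta_4}B_1^*\xrightarrow{\delta_3}H\oplus H^*\xrightarrow{\delta_2}B_1\xrightarrow{\delta_1}B_0$ be a complex with $\delta_2=\delta_3^*$ and $\delta_1=\delta_4^*$ (duals taken using $\beta$). The Clifford action of $H\oplus H^*$ on $\bigwedge H$ is $(f,f')\cdot\omega=f\wedge\omega+\iota_{f'}(\omega)$, where $\iota_{f'}(e_1\wedge\cdots\wedge e_j)=\sum_i(-1)^{i-1}f'(e_i)\,e_1\wedge\cdots\widehat{e_i}\cdots\wedge e_j$. Let $s\in\bigwedge^{\mathrm{odd}}H$ be an element such that for every prime $\mathfrak p\notin\operatorname{Supp}H_0(\mathbb{B})$, the image of $s$ generates the $R_{\mathfrak p}$-module $\{\omega\in\bigwedge H_{\mathfrak p}: x\cdot\omega=0\ \forall x\in(\operatorname{im}\delta_3)_{\mathfrak p}\}$. Let $s_1\in H$ be the degree-one component of $s$, and let $u\in B_1^*$ be any element with $\delta_3(u)=(s_1,0)$. Define $\mathbb{A}\colon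 0\to B_0^*\oplus R\xrightarrow{d_3}B_1^*\xrightarrow{d_2}H^*\xrightarrow{d_1}R$ by $d_3(b,r)=\delta_4(b)+ru$; $d_2=\pi_{H^*}\circ\delta_3$ with $\pi_{H^*}$ the projection onto $H^*$; $d_1(f')=f'(s_1)$. Let $I=\operatorname{im}d_1$. *)

(* Defs.v *)
From HB Require Import structures.
From mathcomp Require Import all_boot all_order all_algebra.
Set Implicit Arguments. Unset Strict Implicit. Unset Printing Implicit Defensive.
Import GRing.Theory.
Local Open Scope ring_scope.

Section RingNotions.
Variable R : idomainType.

Definition is_ideal (I : R -> Prop) : Prop :=
  I 0 /\ (forall x y, I x -> I y -> I (x + y)) /\ (forall r x, I x -> I (r * x)).

Definition is_prime_ideal (P : R -> Prop) : Prop :=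
  is_ideal P /\ ~ P 1 /\ (forall a b, P (a * b) -> P a \/ P b).

Definition noetherian_ring : Prop :=
  forall I : R -> Prop, is_ideal I ->
    exists g : seq R, forall x, I x <->
      exists c : 'I_(size g) -> R, x = \sum_(i < size g) c i * g`_i.

Definition irreducible_elt (x : R) : Prop :=
  x != 0 /\ x \isn't a GRing.unit /\
  (forall a b, x = a * b -> a \is a GRing.unit \/ b \is a GRing.unit).

Definition associated (x y : R) : Prop :=
  exists v, v \is a GRing.unit /\ x = v * y.

Definition UFD : Prop :=
  (forall x : R, x != 0 -> x \isn't a GRing.unit ->
     exists s : seq R, (forall a, a \in s -> irreducible_elt a) /\
                       x = \prod_(a <- s) a) /\
  (forall s t : seq R, (forall a, a \in s -> irreducible_elt a) ->
     (forall b, b \in t -> irreducible_elt b) ->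
     \prod_(a <- s) a = \prod_(b <- t) b ->
     size s = size t /\
     exists t' : seq R, perm_eq t t' /\
       forall i, (i < size s)%N -> associated (nth 0 s i) (nth 0 t' i)).

(* v becomes 0 after localizing at the prime P *)
Definition loc_zero (P : R -> Prop) (V : lmodType R) (v : V) : Prop :=
  exists c, ~ P c /\ c *: v = 0.
End RingNotions.

(* Modules R^k are row vectors 'rV_k; a map given by a matrix M acts as
   v |-> v *m M, so the composite "f then g" is F *m G. *)

Definition dotv (R : comNzRingType) k (x y : 'rV[R]_k) : R := \sum_(i < k) x 0 i * y 0 i.

(* beta((f,f'),(g,g')) = f'(g) + g'(f) on H (+) H^*,  H = R^n *)
Definition betaHH (R : comNzRingType) n (x y : 'rV[R]_(n + n)) : R :=
  dotv (rsubmx x) (lsubmx y) + dotv (rsubmx y) (lsubmx x).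

(* 0 -> C4 -f4-> C3 -f3-> C2 -f2-> C1 -f1-> C0 -> 0 is a split exact complex
   (complex + contracting homotopy) *)
Definition split_exact4 (R : comNzRingType) (m0 m1 m2 m3 m4 : nat)
  (f4 : 'M[R]_(m4, m3)) (f3 : 'M[R]_(m3, m2)) (f2 : 'M[R]_(m2, m1))
  (f1 : 'M[R]_(m1, m0)) : Prop :=
  [/\ f4 *m f3 = 0, f3 *m f2 = 0 & f2 *m f1 = 0] /\
  exists (h0 : 'M[R]_(m0, m1)) (h1 : 'M[R]_(m1, m2)) (h2 : 'M[R]_(m2, m3))
         (h3 : 'M[R]_(m3, m4)),
    [/\ h0 *m f1 = 1%:M, f1 *m h0 + h1 *m f2 = 1%:M,
        f2 *m h1 + h2 *m f3 = 1%:M, f3 *m h2 + h3 *m f4 = 1%:M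
      & f4 *m h3 = 1%:M].

Definition split_exact3 (R : comNzRingType) (m0 m1 m2 m3 : nat)
  (f3 : 'M[R]_(m3, m2)) (f2 : 'M[R]_(m2, m1)) (f1 : 'M[R]_(m1, m0)) : Prop :=
  [/\ f3 *m f2 = 0 & f2 *m f1 = 0] /\
  exists (h0 : 'M[R]_(m0, m1)) (h1 : 'M[R]_(m1, m2)) (h2 : 'M[R]_(m2, m3)),
    [/\ h0 *m f1 = 1%:M, f1 *m h0 + h1 *m f2 = 1%:M,
        f2 *m h1 + h2 *m f3 = 1%:M & f3 *m h2 = 1%:M].

(* omega = sum_S omega(S) e_S, e_S = e_{i1} /\ ... /\ e_{ij}, i1 < ... < ij *)
Notation ext R n := {ffun {set 'I_n} -> R^o}.

Definition wedge1 (R : comNzRingType) n (f : 'rV[R]_n) (w : ext R n) : ext R n :=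
  [ffun T : {set 'I_n} => \sum_(i in T)
     (-1) ^+ #|[set j in T | (j < i)%N]| * f 0 i * w (T :\ i)].

Definition contr (R : comNzRingType) n (f' : 'rV[R]_n) (w : ext R n) : ext R n :=
  [ffun T : {set 'I_n} => \sum_(i | i \notin T)
     (-1) ^+ #|[set j in T | (j < i)%N]| * f' 0 i * w (i |: T)].

Definition cliff (R : comNzRingType) n (x : 'rV[R]_(n + n)) (w : ext R n) : ext R n :=
  wedge1 (lsubmx x) w + contr (rsubmx x) w.

Definition deg1 (R : comNzRingType) n (s : ext R n) : 'rV[R]_n :=
  \row_i s [set i].

(* P is not in Supp H_0(B) = Supp coker(d1), unfolded:
   every element of B_0 becomes 0 in (B_0 / im d1)_P *)
Definition not_in_supp_coker (R : idomainType) (P : R -> Prop) m k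
  (d1 : 'M[R]_(m, k)) : Prop :=
  forall v : 'rV[R]_k, exists t, ~ P t /\ exists x : 'rV[R]_m, t *: v = x *m d1.

(* the image of s generates the R_P-module
   { w in /\H_P : x . w = 0 for all x in (im d3)_P }  (unfolded localization) *)
Definition gen_local_annihilator (R : idomainType) (P : R -> Prop) m n
  (d3 : 'M[R]_(m, n + n)) (s : ext R n) : Prop :=
  let annP (w : ext R n) :=
    forall b : 'rV[R]_m, loc_zero P (cliff (b *m d3) w) in
  annP s /\
  forall w : ext R n, annP w ->
    exists r t, ~ P t /\ loc_zero P (t *: w - r *: s).

(* Main.v *)
Require Import Defs.
From HB Require Import structures.
From mathcomp Require Import all_boot all_order all_algebra ring.
Import GRing.Theory.
Local Open Scope ring_scope.
Set Implicit Arguments. Unset Strict Implicit.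
Lemma card2lt n (a b : 'I_n) : a != b ->
  #|[set j in [set a; b] | (j < a)%N]| = (b < a)%N.
Proof.
move=> ab.
have -> : [set j in [set a; b] | (j < a)%N] = if (b < a)%N then [set b] else set0.
  apply/setP => j; rewrite !inE.
  case: (eqVneq j a) => [->|ja].
    by rewrite ltnn /=; case: ifP => H; rewrite ?inE // (negbTE ab).
  case Hjb: (j == b) => /=.
    move/eqP: Hjb => ->; case: ifP => H; rewrite ?inE ?eqxx ?H //.
  by case: ifP => _; rewrite ?inE ?Hjb.
by case: ifP; rewrite ?cards1 ?cards0.
Qed.
Definition sgn2 (R : comNzRingType) {n} (a b : 'I_n) : R := if (a < b)%N then 1 else -1.

Lemma wedge_pair (R : comNzRingType) n (l : 'rV[R]_n) (w : ext R n) (a b : 'I_n) :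
  a != b -> wedge1 l w [set a; b] = sgn2 R a b * (l 0 a * w [set b] - l 0 b * w [set a]).
Proof.
move=> ab.
have nab : a \notin [set b] by rewrite inE.
have nba : b \notin [set a] by rewrite inE eq_sym.
have Hs : [set a; b] = [set b; a] by rewrite setUC.
rewrite ffunE big_setU1 // big_set1 /= card2lt // setU1K //.
rewrite Hs card2lt 1?eq_sym // setU1K // /sgn2.
case: (ltngtP a b) => [_|_|e] /=; last by move: ab; rewrite (val_inj e) eqxx.
- rewrite expr0 expr1; ring.
- rewrite expr0 expr1; ring.
Qed.

Definition cC (R : comNzRingType) n (w : ext R n) (T : {set 'I_n}) (i : 'I_n) : R :=
  if i \notin T then (-1) ^+ #|[set j in T | (j < i)%N]| * w (i |: T) else 0.

Lemma contrE (R : comNzRingType) n (l : 'rV[R]_n) (w : ext R n) T :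
  contr l w T = \sum_i l 0 i * cC w T i.
Proof.
rewrite ffunE big_mkcond /=; apply: eq_bigr => i _; rewrite /cC.
by case: ifP => _; rewrite ?mulr0 // mulrCA mulrA.
Qed.

Lemma cliff0 (R : comNzRingType) n (x : 'rV[R]_(n + n)) (w : ext R n) :
  cliff x w set0 = \sum_i rsubmx x 0 i * w [set i].
Proof.
rewrite /cliff ffunE contrE ffunE big_set0 add0r; apply: eq_bigr => i _.
rewrite /cC inE /= setU0.
have -> : [set j in (set0 : {set 'I_n}) | (j < i)%N] = set0 by apply/setP=> j; rewrite !inE.
by rewrite cards0 expr0 mul1r.
Qed.

Definition Kmat (R : comNzRingType) n (f0 : 'rV[R]_n) (w : ext R n) : 'M[R]_n :=
  \matrix_(i, b) \sum_a f0 0 a * (if a != b then sgn2 R a b * cC w [set a; b] i else 0).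

Lemma KmatE (R : comNzRingType) n (f0 : 'rV[R]_n) (w : ext R n) i b :
  Kmat f0 w i b = \sum_a f0 0 a * (if a != b then sgn2 R a b * cC w [set a; b] i else 0).
Proof. by rewrite mxE. Qed.

Lemma key2 (R : comNzRingType) n (x : 'rV[R]_(n + n)) (w : ext R n) (f0 : 'rV[R]_n) :
  cliff x w = 0 -> \sum_a f0 0 a * w [set a] = 1 ->
  forall b, lsubmx x 0 b = (\sum_a lsubmx x 0 a * f0 0 a) * w [set b]
                + \sum_i rsubmx x 0 i * Kmat f0 w i b.
Proof.
move=> Hc Hf b; set l := lsubmx x; set l' := rsubmx x.
have E : forall a, f0 0 a * (l 0 a * w [set b] - l 0 b * w [set a]) =
   - (\sum_i l' 0 i * (f0 0 a * (if a != b then sgn2 R a b * cC w [set a; b] i else 0))).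
  move=> a; case: (eqVneq a b) => [->|ab].
    by rewrite subrr mulr0 big1 ?oppr0 // => i _; rewrite mulr0.
  have : cliff x w [set a; b] = 0 by rewrite Hc ?ffunE.
  rewrite /cliff ffunE wedge_pair // contrE => H.
  have s2 : sgn2 R a b * sgn2 R a b = 1 by rewrite /sgn2; case: ifP => _; rewrite ?mulr1 ?mulrNN ?mulr1.
  have H' : l 0 a * w [set b] - l 0 b * w [set a] = - (sgn2 R a b * \sum_i l' 0 i * cC w [set a; b] i).
    by rewrite -[LHS]mul1r -s2 -mulrA -mulrN mulrN -[in RHS]mulrN; congr (_ * _); apply/eqP; rewrite -subr_eq0 opprK; apply/eqP.
  rewrite H' mulrN mulr_sumr mulr_sumr; congr (- _); apply: eq_bigr => i _ /=; ring.
have H : \sum_a f0 0 a * (l 0 a * w [set b] - l 0 b * w [set a]) =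
   \sum_a - (\sum_i l' 0 i * (f0 0 a * (if a != b then sgn2 R a b * cC w [set a; b] i else 0))).
  by apply: eq_bigr => a _; exact: E.
have L : \sum_a f0 0 a * (l 0 a * w [set b] - l 0 b * w [set a]) =
   (\sum_a l 0 a * f0 0 a) * w [set b] - l 0 b.
  rewrite -[X in _ - X]mulr1 -Hf mulr_sumr mulr_suml -sumrB; apply: eq_bigr => a _; ring.
have Rr : \sum_a - (\sum_i l' 0 i * (f0 0 a * (if a != b then sgn2 R a b * cC w [set a; b] i else 0)))
   = - \sum_i l' 0 i * Kmat f0 w i b.
  rewrite sumrN exchange_big /=; congr (- _); apply: eq_bigr => i _.
  by rewrite KmatE mulr_sumr.
rewrite L Rr in H.
have -> : l 0 b = (\sum_a l 0 a * f0 0 a) * w [set b] - ((\sum_a l 0 a * f0 0 a) * w [set b] - l 0 b).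
  by rewrite opprB addrC subrK.
by rewrite H opprK.
Qed.

Lemma dotv_delta (R : comNzRingType) k (v : 'rV[R]_k) j : dotv v (delta_mx 0 j) = v 0 j.
Proof.
rewrite /dotv (bigD1 j) //= big1 => [|t tj]; first by rewrite !mxE !eqxx mulr1 addr0.
by rewrite !mxE (negbTE tj) andbF mulr0.
Qed.

Lemma adj_d2 (R : comNzRingType) n k (d2 : 'M[R]_(n + n, k)) (d3 : 'M[R]_(k, n + n)) :
  (forall y b, dotv (y *m d2) b = betaHH y (b *m d3)) ->
  forall m (Y : 'M_(m, n + n)),
    Y *m d2 = rsubmx Y *m (lsubmx d3)^T + lsubmx Y *m (rsubmx d3)^T.
Proof.
move=> H m Y; apply/matrixP => i j.
have := H (row i Y) (delta_mx 0 j).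
rewrite dotv_delta -rowE /betaHH /dotv => E.
have -> : (Y *m d2) i j = (row i Y *m d2) 0 j by rewrite -row_mul [RHS]mxE.
rewrite E !mxE; congr (_ + _); apply: eq_bigr => t _; rewrite !mxE //.
by rewrite mulrC.
Qed.

Lemma scale_eq0 (R : idomainType) n (c : R) (w : ext R n) : c != 0 -> c *: w = 0 -> w = 0.
Proof.
move=> c0 H; apply/ffunP => T; have := congr1 (fun f : ext R n => f T) H.
by rewrite !ffunE => /eqP; rewrite mulf_eq0 (negbTE c0) /= => /eqP.
Qed.

Unset Implicit Arguments.
Theorem mainTheorem10
  (R : idomainType)
  (HnoethR : noetherian_ring R) (HufdR : UFD R)
  (Hhalf : (2%:R : R) \is a GRing.unit)
  (p q n : nat) (hp : (1 <= p)%N) (hq : (3 <= q)%N) (hn : n = (p + 2)%N)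
  (d4 : 'M[R]_(q - 2, p + q)) (d3 : 'M[R]_(p + q, n + n))
  (d2 : 'M[R]_(n + n, p + q)) (d1 : 'M[R]_(p + q, q - 2))
  (Hcx : [/\ d4 *m d3 = 0, d3 *m d2 = 0 & d2 *m d1 = 0])
  (Hd2 : forall (y : 'rV[R]_(n + n)) (b : 'rV[R]_(p + q)),
           dotv (y *m d2) b = betaHH y (b *m d3))
  (Hd1 : forall (x : 'rV[R]_(p + q)) (c : 'rV[R]_(q - 2)),
           dotv (x *m d1) c = dotv x (c *m d4))
  (s : ext R n)
  (Hsodd : forall S : {set 'I_n}, ~~ odd #|S| -> s S = 0)
  (Hs : forall P : R -> Prop, is_prime_ideal P ->
          not_in_supp_coker P d1 -> gen_local_annihilator P d3 s)
  (u : 'rV[R]_(p + q)) (Hu : u *m d3 = row_mx (deg1 s) 0)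
  (HB : split_exact4 d4 d3 d2 d1)
  (HI : forall r : R, exists f' : 'rV[R]_n, (f' *m (deg1 s)^T) 0 0 = r) :
  split_exact3 (col_mx d4 u : 'M[R]_(q - 2 + 1, p + q))
               (rsubmx d3 : 'M[R]_(p + q, n))
               ((deg1 s)^T : 'M[R]_(n, 1)).
Proof.
case: HB => [[Hc4 Hc3 Hc2] [h0B [h1B [h2B [h3B [E0 E1 E2 E3 E4]]]]]].
have Hcl : forall b : 'rV[R]_(p + q), cliff (b *m d3) s = 0.
  pose P0 := fun x : R => x = 0.
  have HP : is_prime_ideal P0.
    split; first split; rewrite /P0 //.
      by split => [x y -> ->|r x ->]; rewrite ?addr0 ?mulr0.
    split; first exact/eqP/oner_neq0.
    by move=> a b /eqP; rewrite mulf_eq0 => /orP [/eqP|/eqP]; [left|right].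
  have HN : not_in_supp_coker P0 d1.
    move=> v; exists 1; split; first exact/eqP/oner_neq0.
    by exists (v *m h0B); rewrite scale1r -mulmxA E0 mulmx1.
  have [Hann _] := Hs P0 HP HN.
  move=> b; have [c [c0 Hc]] := Hann b.
  by apply: (scale_eq0 (c := c)) => //; apply/eqP.
set s1 := deg1 s.
set D3L := lsubmx d3; set D3R := rsubmx d3.
have [f0 Hf0] := HI 1.
have Hf0' : \sum_a f0 0 a * s [set a] = 1.
  by rewrite -Hf0 mxE; apply: eq_bigr => a _; rewrite !mxE.
have F : f0 *m s1^T = 1%:M by rewrite [LHS]mx11_scalar Hf0.
set K := Kmat f0 s.
have HA : D3R *m s1^T = 0.
  apply/matrixP => i j; rewrite ord1 [RHS]mxE.
  have := cliff0 (row i d3) s; rewrite rowE Hcl ffunE => E.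
  rewrite mxE; apply/esym/(etrans E); apply: eq_bigr => k _; rewrite -rowE !mxE //.
have HBk : D3L = D3R *m K + D3L *m (f0^T *m s1).
  apply/matrixP => i b.
  have E := key2 (Hcl (delta_mx 0 i)) Hf0' b; rewrite -rowE in E.
  have -> : D3L i b = lsubmx (row i d3) 0 b by rewrite !mxE.
  rewrite E.
  rewrite !mxE addrC; congr (_ + _).
    rewrite mulr_suml; apply: eq_bigr => a _; rewrite !mxE big_ord1 !mxE mulrA //.
  by apply: eq_bigr => k _; rewrite !mxE.
have Hd3 : d3 = row_mx D3L D3R by rewrite /D3L /D3R hsubmxK.
have Hu1 : u *m D3L = s1 by rewrite /D3L mulmx_lsub Hu row_mxKl.
have Hu2 : u *m D3R = 0 by rewrite /D3R mulmx_rsub Hu row_mxKr.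
have Hd4L : d4 *m D3L = 0 by rewrite /D3L mulmx_lsub Hc4; apply/matrixP => i j; rewrite !mxE.
have Hd4R : d4 *m D3R = 0 by rewrite /D3R mulmx_rsub Hc4; apply/matrixP => i j; rewrite !mxE.
set P := 1%:M - s1^T *m f0.
have HP : P *m s1^T = 0 by rewrite mulmxBl mul1mx -mulmxA F mulmx1 subrr.
set Y := row_mx (P *m - K^T) P.
have HY : Y *m d2 = 0.
  rewrite (adj_d2 Hd2) row_mxKr row_mxKl.
  have HBt : D3L^T = K^T *m D3R^T + s1^T *m (f0 *m D3L^T).
    by rewrite {1}HBk raddfD /= !trmx_mul trmxK !mulmxA.
  by rewrite HBt mulmxDr !mulmxA HP !mul0mx addr0 mulmxN mulNmx subrr.
set hA1 := Y *m h2B.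
have HY3 : hA1 *m d3 = Y.
  have E2' : h2B *m d3 = 1%:M - d2 *m h1B by rewrite -E2 addrC addKr.
  by rewrite /hA1 -mulmxA E2' mulmxBr mulmx1 mulmxA HY mul0mx subr0.
have Hh1 : hA1 *m D3R = P by rewrite /D3R mulmx_rsub HY3 row_mxKr.
set Bp := 1%:M - D3R *m hA1.
have HBp : Bp *m D3R = 0.
  by rewrite mulmxBl mul1mx -mulmxA Hh1 /P mulmxBr mulmx1 mulmxA HA mul0mx subr0 subrr.
set rvec := Bp *m D3L *m f0^T.
have HBpL : Bp *m D3L = rvec *m s1.
  by rewrite {1}HBk mulmxDr [Bp *m (D3R *m K)]mulmxA HBp mul0mx add0r !mulmxA.
set Z := Bp - rvec *m u.
have HZ : Z *m d3 = 0.
  rewrite mulmxBl -mulmxA Hu {1}Hd3 mul_mx_row HBpL HBp mul_mx_row mulmx0 subrr //.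
set X := Z *m h3B.
have HX : X *m d4 = Z.
  by rewrite /X -mulmxA; apply/esym; rewrite -{1}[Z]mulmx1 -E3 mulmxDr [Z *m (d3 *m h2B)]mulmxA HZ mul0mx add0r.
have d4Bp : d4 *m Bp = d4 by rewrite mulmxBr mulmx1 mulmxA Hd4R mul0mx subr0.
have uBp : u *m Bp = u by rewrite mulmxBr mulmx1 mulmxA Hu2 mul0mx subr0.
have d4r : d4 *m rvec = 0 by rewrite /rvec !mulmxA d4Bp Hd4L !mul0mx.
have ur : u *m rvec = 1%:M.
  by rewrite /rvec !mulmxA uBp Hu1 -{1}(trmxK s1) -trmx_mul F tr_scalar_mx.
have d4X : d4 *m X = 1%:M.
  by rewrite /X /Z mulmxA mulmxBr d4Bp mulmxA d4r mul0mx subr0 E4.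
have uX : u *m X = 0.
  by rewrite /X /Z mulmxA mulmxBr uBp mulmxA ur mul1mx subrr mul0mx.
split.
  by split => //; rewrite mul_col_mx Hd4R Hu2 col_mx0.
exists f0, hA1, (row_mx X rvec); split => //.
- by rewrite Hh1 /P addrC subrK.
- by rewrite mul_row_col HX /Z subrK /Bp addrC subrK.
- by rewrite mul_col_row d4X d4r uX ur -scalar_mx_block.
Qed.
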